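(* Fix $n\in\mathbb N$, $z=x+iy\in\mathbb H$ and a simple type cusp $\mathfrak c$ of $\Gamma_n$. Let $z'=x'+iy'\in\mathbb H$ be such that $\Gamma_nz=\Gamma_n\tau_{\mathfrak c}z'$. Then $$\mathcal R_n(x,y)=\bigcup_{d\mid n}\mathcal R^{\rm pr}_{n/d}\left(x'_{\mathfrak c,d},\ d^2y'/\omega_{\mathfrak c}\right)$$ for some $x'_{\mathfrak c,d}\in\mathbb R/\mathbb Z$ depending only on $x'$, $\mathfrak c$ and $d$.
   Context: $\Gamma_1=\mathrm{SL}_2(\mathbb Z)$ and $\Gamma_n=\left\{\begin{pmatrix}a&b\\c&d\end{pmatrix}\in\Gamma_1:n^2\mid c,\ a\equiv d\equiv\pm1\pmod n\right\}$. Cusps of $\Gamma_n$ are $\Gamma_n$-orbits in $\mathbb Q\cup\{\infty\}$; a cusp is of simple type if it has a representative $m/q$ with $\gcd(m,q)=1$ and $\gcd(n^2,q)\mid n$. For a cusp $\mathfrak c$, $\tau_{\mathfrak c}\in\Gamma_1$ satisfies $\tau_{\mathfrak c}\infty=\mathfrak c$, and the width $\omega_{\mathfrak c}$ is the positive integer with $\tau_{\mathfrak c}^{-1}(\tau_{\mathfrak c}N\tau_{\mathfrak c}^{-1}\cap\Gamma_n)\tau_{\mathfrak c}=\langle\begin{pmatrix}1&\omega_{\mathfrak c}\\0&1\end{pmatrix}\rangle$, $N$ the upper-triangular unipotent subgroup (for $\mathfrak c=m/l$ in lowest terms, $\omega_{\mathfrak c}=n^2/\gcd(n,l)^2$). For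 $n\in\mathbb N$, $x\in\mathbb R/\mathbb Z$, $y>0$, in $\mathcal M=\Gamma_1\backslash\mathbb H$: $\mathcal R_n(x,y)=\{\Gamma_1(x+\tfrac jn+iy):0\le j\le n-1\}$, $\mathcal R^{\rm pr}_n(x,y)=\{\Gamma_1(x+\tfrac jn+iy):j\in(\mathbb Z/n\mathbb Z)^\times\}$ (with $(\mathbb Z/1\mathbb Z)^\times=\{0\}$). *)

(* Defs.v *)
From HB Require Import structures.
From mathcomp Require Import all_boot all_order all_algebra.
From mathcomp Require Import reals.
Set Implicit Arguments. Unset Strict Implicit. Unset Printing Implicit Defensive.
Import Order.TTheory GRing.Theory Num.Theory.
Local Open Scope ring_scope.

Definition ea (g : 'M[int]_2) : int := g ord0 ord0.
Definition eb (g : 'M[int]_2) : int := g ord0 1.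
Definition ec (g : 'M[int]_2) : int := g 1 ord0.
Definition ed (g : 'M[int]_2) : int := g 1 1.

Definition inSL2 (g : 'M[int]_2) : Prop := \det g = 1.

Definition inGamma (n : nat) (g : 'M[int]_2) : Prop :=
  inSL2 g /\ ((n ^ 2)%N %| ec g)%Z /\
  (((ea g == 1 %[mod n])%Z /\ (ed g == 1 %[mod n])%Z) \/
   ((ea g == -1 %[mod n])%Z /\ (ed g == -1 %[mod n])%Z)).

(* Moebius action of an integer matrix on z = x + i y, represented as (x, y) *)
Definition mob (R : realType) (g : 'M[int]_2) (z : R * R) : R * R :=
  let a := (ea g)%:~R in let b := (eb g)%:~R in
  let c := (ec g)%:~R in let d := (ed g)%:~R in
  let x := z.1 in let y := z.2 in
  let den := (c * x + d) ^+ 2 + (c * y) ^+ 2 in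
  (((a * x + b) * (c * x + d) + a * c * y ^+ 2) / den, y / den).

Definition inH (R : realType) (z : R * R) : Prop := 0 < z.2.

(* Gamma_1-equivalence of points of H: same point of M = Gamma_1 \ H *)
Definition equiv1 (R : realType) (w z : R * R) : Prop :=
  exists g : 'M[int]_2, inSL2 g /\ w = mob g z.

(* w (in H) lies in (the Gamma_1-orbit of a point of) R_n(x, y) *)
Definition inRn (R : realType) (n : nat) (x y : R) (w : R * R) : Prop :=
  exists j : nat, (j < n)%N /\ equiv1 w (x + j%:R / n%:R, y).

(* w lies in R^pr_m(x, y): j ranges over (Z/mZ)^x, with (Z/1Z)^x = {0} *)
Definition inRpr (R : realType) (m : nat) (x y : R) (w : R * R) : Prop :=
  exists j : nat, [/\ (j < m)%N, coprime j m & equiv1 w (x + j%:R / m%:R, y)].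

(* Q u {oo} as option rat (None = oo) with the Moebius action *)
Definition act_cusp (g : 'M[int]_2) (p : option rat) : option rat :=
  let a : rat := (ea g)%:~R in let b : rat := (eb g)%:~R in
  let c : rat := (ec g)%:~R in let d : rat := (ed g)%:~R in
  match p with
  | None => if c == 0 then None else Some (a / c)
  | Some r => if c * r + d == 0 then None else Some ((a * r + b) / (c * r + d))
  end.

(* The cusp Gamma_n (tau oo) is of simple type: it has a representative m/q
   (gcd(m,q)=1) with gcd(n^2, q) | n.  For a rational r in lowest terms q = denq r;
   the representative oo = 1/0 has q = 0. *)
Definition simple_type (n : nat) (tau : 'M[int]_2) : Prop :=
  exists g : 'M[int]_2, inGamma n g /\
    match act_cusp g (act_cusp tau None) with
    | None => (gcdn (n ^ 2) 0 %| n)%N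
    | Some r => (gcdn (n ^ 2) `|denq r| %| n)%N
    end.

Definition transl (k : int) : 'M[int]_2 :=
  \matrix_(i < 2, j < 2) (if i == j then 1 else if (i == ord0) && (j == 1) then k else 0).

(* omega is the width of the cusp tau oo for Gamma_n:
   tau^-1 (tau N tau^-1 cap Gamma_n) tau = < (1 omega; 0 1) > *)
Definition is_width (n : nat) (tau : 'M[int]_2) (omega : nat) : Prop :=
  (0 < omega)%N /\
  forall k : int, inGamma n (tau *m transl k *m invmx tau) <-> (omega%:Z %| k)%Z.

(* Main.v *)
Require Import Defs.
From HB Require Import structures.
From mathcomp Require Import all_boot all_order all_algebra.
From mathcomp Require Import reals.
From mathcomp Require Import ring lra zify.
Set Implicit Arguments. Unset Strict Implicit. Unset Printing Implicit Defensive.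
Import Order.TTheory GRing.Theory Num.Theory.
Local Open Scope ring_scope.

Record M2 (T : Type) := mk2 { m11 : T; m12 : T; m21 : T; m22 : T }.

Definition qmul (T : pzRingType) (A B : M2 T) : M2 T :=
  mk2 (m11 A * m11 B + m12 A * m21 B) (m11 A * m12 B + m12 A * m22 B)
      (m21 A * m11 B + m22 A * m21 B) (m21 A * m12 B + m22 A * m22 B).
Definition qdet (T : pzRingType) (A : M2 T) : T := m11 A * m22 A - m12 A * m21 A.

Definition mobq (R : realType) (A : M2 R) (z : R * R) : R * R :=
  let a := m11 A in let b := m12 A in let c := m21 A in let d := m22 A in
  let x := z.1 in let y := z.2 in
  let den := (c * x + d) ^+ 2 + (c * y) ^+ 2 in
  (((a * x + b) * (c * x + d) + a * c * y ^+ 2) / den, qdet A * y / den).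
Lemma den_pos (R : realType) (c d x y : R) : 0 < y -> (c != 0) || (d != 0) ->
  0 < (c * x + d) ^+ 2 + (c * y) ^+ 2.
Proof.
move=> y0 /orP[c0|d0]; have y2 : 0 < y ^+ 2 by rewrite exprn_gt0.
  have c2 : 0 < c ^+ 2 by rewrite lt_def sqr_ge0 sqrf_eq0 c0.
  have := sqr_ge0 (c * x + d). rewrite exprMn. nra.
case: (eqVneq c 0) => [->|c0].
  rewrite !mul0r add0r expr0n /= addr0. by rewrite lt_def sqr_ge0 sqrf_eq0 d0.
have c2 : 0 < c ^+ 2 by rewrite lt_def sqr_ge0 sqrf_eq0 c0.
have := sqr_ge0 (c * x + d). rewrite exprMn. nra.
Qed.

Lemma mobq_comp (R : realType) (A B : M2 R) z : 0 < z.2 -> qdet A != 0 -> qdet B != 0 ->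
  mobq A (mobq B z) = mobq (qmul A B) z.
Proof.
case: z => x y /= y0 dA dB.
case: A dA => a b c d /= dA; case: B dB => a' b' c' d' /= dB.
rewrite /mobq /qdet /qmul /= in dA dB *.
Abort.
Lemma qdet_row2 (R : realType) (M : M2 R) : qdet M != 0 -> (m21 M != 0) || (m22 M != 0).
Proof.
case: M => a b c d; rewrite /qdet /=.
case: (eqVneq c 0) => [->|//]; case: (eqVneq d 0) => [->|//]. by rewrite !mulr0 subrr eqxx.
Qed.

Lemma qdet_mul (T : comPzRingType) (A B : M2 T) : qdet (qmul A B) = qdet A * qdet B.
Proof. case: A => a b c d; case: B => a' b' c' d'; rewrite /qdet /qmul /=; ring. Qed.

Lemma mobq_comp (R : realType) (A B : M2 R) z : 0 < z.2 -> qdet A != 0 -> qdet B != 0 ->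
  mobq A (mobq B z) = mobq (qmul A B) z.
Proof.
case: z => x y /= y0 dA dB.
have dAB : qdet (qmul A B) != 0 by rewrite qdet_mul mulf_neq0.
have PB := den_pos x y0 (qdet_row2 dB).
have PAB := den_pos x y0 (qdet_row2 dAB).
move: dA dB dAB PB PAB.
case: A => a b c d; case: B => a' b' c' d'.
rewrite /mobq /qdet /qmul /= => dA dB dAB PB PAB.
set D := (c' * x + d') ^+ 2 + (c' * y) ^+ 2 in PB *.
set E := ((c * a' + d * c') * x + (c * b' + d * d')) ^+ 2 + ((c * a' + d * c') * y) ^+ 2 in PAB *.
have D0 : D != 0 by rewrite gt_eqF.
have E0 : E != 0 by rewrite gt_eqF.
have -> : (c * (((a' * x + b') * (c' * x + d') + a' * c' * y ^+ 2) / D) + d) ^+ 2 +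
  (c * ((a' * d' - b' * c') * y / D)) ^+ 2 = E / D.
  apply: (mulIf D0); rewrite /E /D; field; exact: D0.
congr pair; rewrite /E /D; field; rewrite -/D -/E; apply/andP; split => //.
Qed.
Lemma det2E (g : 'M[int]_2) : \det g = ea g * ed g - eb g * ec g.
Proof.
rewrite (expand_det_row _ ord0) !big_ord_recl big_ord0 /cofactor !det_mx11 /row' /col' !mxE /=.
rewrite /ea /eb /ec /ed.
have -> : lift ord0 (0 : 'I_1) = 1 :> 'I_2 by apply: val_inj.
have -> : lift (1 : 'I_2) (0 : 'I_1) = ord0 :> 'I_2 by apply: val_inj.
rewrite /= expr0 expr1; ring.
Qed.
Definition mkM (a b c d : int) : 'M[int]_2 :=
  \matrix_(i < 2, j < 2) (if i == ord0 then (if j == ord0 then a else b) else (if j == ord0 then c else d)).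
Lemma mkM_E a b c d : [/\ ea (mkM a b c d) = a, eb (mkM a b c d) = b, ec (mkM a b c d) = c & ed (mkM a b c d) = d].
Proof. by rewrite /ea /eb /ec /ed !mxE. Qed.

Definition toq (g : 'M[int]_2) : M2 int := mk2 (ea g) (eb g) (ec g) (ed g).
Definition qmap (R : realType) (A : M2 int) : M2 R :=
  mk2 (m11 A)%:~R (m12 A)%:~R (m21 A)%:~R (m22 A)%:~R.

Lemma qmapM (R : realType) (A B : M2 int) : qmap R (qmul A B) = qmul (qmap R A) (qmap R B).
Proof. by case: A => a b c d; case: B => a' b' c' d'; rewrite /qmap /qmul /= !rmorphD !rmorphM. Qed.
Lemma qdet_map (R : realType) (A : M2 int) : qdet (qmap R A) = (qdet A)%:~R.
Proof. by case: A => a b c d; rewrite /qmap /qdet /= rmorphB !rmorphM. Qed.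

Lemma mob_mobq (R : realType) (g : 'M[int]_2) z : qdet (toq g) = 1 -> mob g z = mobq (qmap R (toq g)) z.
Proof. by move=> H; rewrite /mobq qdet_map H rmorph1 mul1r. Qed.

Lemma equiv1P (R : realType) (w z : R * R) :
  equiv1 w z <-> exists G : M2 int, qdet G = 1 /\ w = mobq (qmap R G) z.
Proof.
split.
  case=> g [Hg ->]; exists (toq g).
  have H : qdet (toq g) = 1 by rewrite /qdet /= -det2E.
  by split => //; rewrite mob_mobq.
case=> [[a b c d]] [H ->]; exists (mkM a b c d).
have [Ea Eb Ec Ed] := mkM_E a b c d.
have H' : qdet (toq (mkM a b c d)) = 1 by rewrite /toq Ea Eb Ec Ed.
split; first by rewrite /inSL2 det2E Ea Eb Ec Ed.
by rewrite mob_mobq // /toq Ea Eb Ec Ed.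
Qed.

Definition qinv (T : pzRingType) (A : M2 T) := mk2 (m22 A) (- m12 A) (- m21 A) (m11 A).
Definition q1 (T : pzRingType) : M2 T := mk2 1 0 0 1.

Lemma mobq1 (R : realType) z : 0 < z.2 -> mobq (q1 R) z = z.
Proof.
case: z => x y /= y0; rewrite /mobq /qdet /=.
have y2 : y ^+ 2 != 0 by rewrite expf_neq0 // gt_eqF.
congr pair; field; rewrite ?mul0r ?add0r ?mul1r ?addr0 ?oner_eq0 //= ; rewrite !(mul0r, add0r, mul1r, addr0) ?y2 ?oner_eq0 //.
Qed.

Lemma equiv1_sym (R : realType) (w z : R * R) : 0 < z.2 -> equiv1 w z -> equiv1 z w.
Proof.
move=> z0 /equiv1P [[a b c d] [H ->]]; apply/equiv1P.
have Hi : qdet (qinv (mk2 a b c d)) = 1 by rewrite /qinv /qdet /= -H /qdet /=; ring.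
exists (qinv (mk2 a b c d)); split => //.
rewrite mobq_comp //; last by rewrite qdet_map H oner_eq0.
  rewrite -qmapM.
  have -> : qmul (qinv (mk2 a b c d)) (mk2 a b c d) = q1 int.
    rewrite /qinv /qmul /q1 /=; move: H; rewrite /qdet /= => H; congr mk2; rewrite -?H; ring.
  by rewrite /qmap /q1 /= mobq1.
by rewrite qdet_map Hi oner_eq0.
Qed.

Lemma equiv1_trans (R : realType) (w u z : R * R) : 0 < z.2 -> 0 < u.2 -> equiv1 w u -> equiv1 u z -> equiv1 w z.
Proof.
move=> z0 u0 /equiv1P [A [HA ->]] /equiv1P [B [HB ->]]; apply/equiv1P.
exists (qmul A B); split; first by rewrite qdet_mul HA HB mulr1.
by rewrite mobq_comp // ?qmapM // qdet_map ?HA ?HB oner_eq0.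
Qed.
Ltac lin E := apply: (@eq_trans _ _ E _); [ring | ].
Ltac linu E := apply: (@eq_trans _ _ E _); [repeat match goal with H := _ |- _ => subst H end; ring | ].

Lemma arith_pq (N a b dl g0 n1 c1 u0 v0 u2 v2 j d m f s1 t1 k t : int) :
  N = g0 * n1 -> a * dl - b * (g0 * c1) = 1 -> u0 * N + v0 * c1 = 1 ->
  u2 * N ^+ 2 + v2 * c1 = 1 -> N = d * m -> n1 * a + j * c1 = d * f ->
  s1 * f + t1 * m = 1 -> c1 * k * f + 1 = t * m -> n1 != 0 ->
  exists p q, p * f + q * (m * c1) = 1 /\
              p * (N * b + j * dl) + q * N * dl = v2 * dl * d + n1 * k.
Proof.
move=> HN H3 H4 H5 H1 H2 H6 H7 n10; subst N.
have h1 : d * m - g0 * n1 = 0 by rewrite H1 subrr.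
have h2 : n1 * a + j * c1 - d * f = 0 by rewrite H2 subrr.
have h3 : a * dl - b * (g0 * c1) - 1 = 0 by rewrite H3 subrr.
have h4 : u0 * (g0 * n1) + v0 * c1 - 1 = 0 by rewrite H4 subrr.
have h5 : u2 * (g0 * n1) ^+ 2 + v2 * c1 - 1 = 0 by rewrite H5 subrr.
have h6 : s1 * f + t1 * m - 1 = 0 by rewrite H6 subrr.
have h7 : c1 * k * f + 1 - t * m = 0 by rewrite H7 subrr.
have [s [t' hs]] : exists s t', s * f + t' * c1 - 1 = 0.
  exists (u0 * g0 * dl * d), (- u0 * g0 * dl * j - u0 * g0 ^+ 2 * b * n1 + v0 * a * dl - v0 * b * g0 * c1).
  lin (- u0 * g0 * dl * (n1 * a + j * c1 - d * f) + (u0 * (g0 * n1) + v0 * c1 - 1) * (a * dl - b * (g0 * c1) - 1)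
     + (u0 * (g0 * n1) + v0 * c1 - 1) + (a * dl - b * (g0 * c1) - 1)).
  by rewrite h2 h3 h4; ring.
have [p0 [q0 h8]] : exists p0 q0, p0 * f + q0 * (m * c1) - 1 = 0.
  exists (s1 * s * f + s1 * t' * c1 + t1 * m * s), (t1 * t').
  lin ((s1 * f + t1 * m - 1) * (s * f + t' * c1 - 1) + (s1 * f + t1 * m - 1) + (s * f + t' * c1 - 1)).
  by rewrite h6 hs; ring.
pose B0 := p0 * (g0 * n1 * b + j * dl) + q0 * (g0 * n1) * dl.
have hB : c1 * B0 - (dl * d - p0 * n1) = 0.
  linu (- p0 * n1 * (a * dl - b * (g0 * c1) - 1) + p0 * dl * (n1 * a + j * c1 - d * f)
       + dl * d * (p0 * f + q0 * (m * c1) - 1) - c1 * q0 * dl * (d * m - g0 * n1)).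
  by rewrite h1 h2 h3 h8; ring.
pose X := B0 - v2 * dl * d.
pose Y := dl * d * u2 * g0 * (g0 * n1) - p0.
have hX : c1 * X - n1 * Y = 0.
  linu ((c1 * B0 - (dl * d - p0 * n1)) - dl * d * (u2 * (g0 * n1) ^+ 2 + v2 * c1 - 1)).
  by rewrite hB h5; ring.
pose K0 := u0 * g0 * X + v0 * Y.
have hXK : X - n1 * K0 = 0.
  linu (- X * (u0 * (g0 * n1) + v0 * c1 - 1) + v0 * (c1 * X - n1 * Y)).
  by rewrite h4 hX; ring.
have hY : c1 * K0 - Y = 0.
  apply: (mulfI n10); rewrite mulr0.
  linu ((c1 * X - n1 * Y) - c1 * (X - n1 * K0)).
  by rewrite hX hXK; ring.
pose T' := t * (K0 - k) - k * (f * dl * d * u2 * g0 * d + q0 * c1 - t).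
have hK : K0 - k - m * T' = 0.
  linu (K0 * (c1 * k * f + 1 - t * m) - k * f * (c1 * K0 - Y) + k * f * dl * d * u2 * g0 * (d * m - g0 * n1)
       + k * (p0 * f + q0 * (m * c1) - 1)).
  by rewrite h7 hY h1 h8; ring.
exists (p0 + T' * m * c1), (q0 - T' * f); split.
  apply/eqP; rewrite -subr_eq0; apply/eqP.
  linu (p0 * f + q0 * (m * c1) - 1).
  by rewrite h8.
apply/eqP; rewrite -subr_eq0; apply/eqP.
linu ((X - n1 * K0) + n1 * (K0 - k - m * T') + T' * (- m * n1 * (a * dl - b * (g0 * c1) - 1)
     + m * dl * (n1 * a + j * c1 - d * f) + f * dl * (d * m - g0 * n1))).
by rewrite hXK hK h3 h2 h1; ring.
Qed.
Lemma natintR (R : realType) (n : nat) : ((n%:Z)%:~R : R) = n%:R.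
Proof. by rewrite -pmulrn. Qed.

Lemma qmulA (T : comPzRingType) (A B C : M2 T) : qmul A (qmul B C) = qmul (qmul A B) C.
Proof. case: A => ????; case: B => ????; case: C => ????; rewrite /qmul /=; congr mk2; ring. Qed.

Lemma qmul1 (T : comPzRingType) (A : M2 T) : qmul (q1 T) A = A.
Proof. case: A => ????; rewrite /qmul /q1 /=; congr mk2; ring. Qed.

Lemma mobq_pos (R : realType) (A : M2 R) z : 0 < z.2 -> 0 < qdet A -> 0 < (mobq A z).2.
Proof.
move=> z0 dA; have := den_pos z.1 z0 (qdet_row2 (lt0r_neq0 dA)).
rewrite /mobq /= => H; by rewrite divr_gt0 // mulr_gt0.
Qed.

Lemma mobq_transl (R : realType) (n j : int) (x y : R) : n != 0 ->
  mobq (qmap R (mk2 n j 0 n)) (x, y) = (x + j%:~R / n%:~R, y).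
Proof.
move=> n0; have nR : (n%:~R : R) != 0 by rewrite intr_eq0.
rewrite /mobq /qmap /qdet /=; rewrite !(mul0r, add0r, mulr0, subr0, expr0n, addr0) /=.
congr pair; field; by rewrite ?nR ?expf_neq0.
Qed.
Lemma forward (R : realType) (n : nat) (a b c dl g0 n1 c1 u0 v0 u2 v2 : int)
  (ag bg cg dg c0 r : int) (x y x' y' : R) (j d m : nat) (f s1 t1 k t : int) (om : nat) :
  (0 < n)%N -> (n:int) = g0 * n1 -> c = g0 * c1 -> a * dl - b * c = 1 -> u0 * n + v0 * c1 = 1 ->
  u2 * (n:int) ^+ 2 + v2 * c1 = 1 -> ag * dg - bg * cg = 1 -> cg = (n:int) ^+ 2 * c0 ->
  dg = ag + (n:int) * r ->
  0 < y' -> 0 < y ->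
  (x, y) = mobq (qmap R (mk2 ag bg cg dg)) (mobq (qmap R (mk2 a b c dl)) (x', y')) ->
  n = (d * m)%N -> n1 * a + (j:int) * c1 = (d:int) * f -> s1 * f + t1 * m = 1 ->
  c1 * k * f + 1 = t * m -> (om%:R : R) = (n1%:~R) ^+ 2 ->
  equiv1 (x + j%:R / n%:R, y)
    (((g0 * d)%:~R * x' + (v2 * dl * d)%:~R) / ((n1 * m)%:~R) + k%:~R / m%:R,
     d%:R ^+ 2 * y' / om%:R).
Proof.
move=> n0 HN Hc Hdet Hu0 Hu2 Hg Hcg Hdg y'0 y0 Hxy Hdm He Hf Hk Hom.
have Nne0 : (n:int) != 0 by lia.
have n10 : n1 != 0 by apply: contra Nne0; rewrite HN => /eqP ->; rewrite mulr0.
have HdmZ : (n:int) = d * m by rewrite Hdm PoszM.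
have [d0' m0'] : (0 < d)%N /\ (0 < m)%N by move: n0; rewrite Hdm muln_gt0 => /andP.
have d0 : (d:int) != 0 by lia.
have m0 : (m:int) != 0 by lia.
have [p [q [Hpq HB]]] := @arith_pq (n:int) a b dl g0 n1 c1 u0 v0 u2 v2 j d m f s1 t1 k t HN (etrans (congr1 (fun z => a * dl - b * z) (esym Hc)) Hdet)
   Hu0 Hu2 HdmZ He Hf Hk n10.
pose tau := mk2 a b c dl. pose gq := mk2 ag bg cg dg. pose Tn := mk2 (n:int) (j:int) 0 (n:int).
pose gp := mk2 (ag + (j:int) * (n:int) * c0) (bg + (j:int) * r - (j:int) ^+ 2 * c0) cg (dg - (j:int) * (n:int) * c0).
pose ga := mk2 p q (- ((m:int) * c1)) f. pose gai := mk2 f (- q) ((m:int) * c1) p.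
pose U := mk2 (g0 * (d:int)) (v2 * dl * (d:int) + n1 * k) 0 (n1 * (m:int)).
have I1 : qmul Tn gq = qmul gp Tn.
  rewrite /Tn /gq /gp /qmul /= Hcg Hdg; congr mk2; ring.
have hA : (n:int) - g0 * n1 = 0 by rewrite HN subrr.
have hB : (n:int) - (d:int) * (m:int) = 0 by rewrite HdmZ subrr.
have h2 : n1 * a + (j:int) * c1 - (d:int) * f = 0 by rewrite He subrr.
have h3 : a * dl - b * (g0 * c1) - 1 = 0 by rewrite -Hc Hdet subrr.
have h8 : p * f + q * ((m:int) * c1) - 1 = 0 by rewrite Hpq subrr.
have I2 : qmul ga (qmul Tn tau) = U.
  rewrite /ga /Tn /tau /U /qmul /= Hc; congr mk2.
  - apply/eqP; rewrite -subr_eq0; apply/eqP.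
    lin (p * a * ((n:int) - g0 * n1) + p * g0 * (n1 * a + (j:int) * c1 - (d:int) * f)
         + q * g0 * c1 * ((n:int) - (d:int) * (m:int)) + g0 * d * (p * f + q * ((m:int) * c1) - 1)).
    by rewrite hA h2 hB h8; ring.
  - rewrite -HB; ring.
  - apply/eqP; rewrite -subr_eq0; apply/eqP.
    lin (- (m:int) * c1 * g0 * (n1 * a + (j:int) * c1 - (d:int) * f) - (m:int) * c1 * a * ((n:int) - g0 * n1)
         + f * g0 * c1 * ((n:int) - (d:int) * (m:int))).
    by rewrite hA h2 hB; ring.
  - apply/eqP; rewrite -subr_eq0; apply/eqP.
    lin ((m:int) * n1 * (a * dl - b * (g0 * c1) - 1) - (m:int) * c1 * b * ((n:int) - g0 * n1)
         - (m:int) * dl * (n1 * a + (j:int) * c1 - (d:int) * f) + f * dl * ((n:int) - (d:int) * (m:int))).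
    by rewrite hA h2 hB h3; ring.
have I3 : qmul gai ga = q1 int.
  rewrite /gai /ga /qmul /q1 /=; congr mk2.
  - apply/eqP; rewrite -subr_eq0; apply/eqP; lin (p * f + q * ((m:int) * c1) - 1); by rewrite h8.
  - ring.
  - ring.
  - apply/eqP; rewrite -subr_eq0; apply/eqP; lin (p * f + q * ((m:int) * c1) - 1); by rewrite h8.
have I4 : qmul Tn (qmul gq tau) = qmul (qmul gp gai) U.
  have -> : qmul (qmul gp gai) U = qmul gp (qmul Tn tau) by rewrite -I2 -qmulA (qmulA gai) I3 qmul1.
  by rewrite qmulA I1 -qmulA.
have dgp : qdet gp = 1.
  rewrite /gp /qdet /=; move: Hg; rewrite Hcg Hdg => Hg.
  apply/eqP; rewrite -subr_eq0; apply/eqP.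
  lin (ag * (ag + (n:int) * r) - bg * ((n:int) ^+ 2 * c0) - 1); by rewrite Hg subrr.
have dgai : qdet gai = 1.
  rewrite /gai /qdet /=; apply/eqP; rewrite -subr_eq0; apply/eqP.
  lin (p * f + q * ((m:int) * c1) - 1); by rewrite h8.
have dpos (A : M2 int) : qdet A = 1 -> 0 < qdet (qmap R A) by move=> H; rewrite qdet_map H rmorph1 ltr01.
have dne (A : M2 int) : qdet A = 1 -> qdet (qmap R A) != 0 by move=> H; rewrite lt0r_neq0 // dpos.
have dtau : qdet tau = 1 by rewrite /tau /qdet /=.
have dgq : qdet gq = 1 by rewrite /gq /qdet /=.
have dTn : qdet (qmap R Tn) != 0.
  by rewrite qdet_map /Tn /qdet /= mulr0 subr0 intr_eq0 mulf_neq0.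
have dU : qdet (qmap R U) != 0.
  rewrite qdet_map /U /qdet /= mulr0 subr0 intr_eq0.
  have g00 : g0 != 0 by apply: contra Nne0; rewrite HN => /eqP ->; rewrite mul0r.
  by rewrite !mulf_neq0.
have ptau : 0 < (mobq (qmap R tau) (x', y')).2 by apply: mobq_pos => //; exact: dpos.
have -> : (x + j%:R / n%:R, y) = mobq (qmap R (qmul gp gai)) (mobq (qmap R U) (x', y')).
  rewrite mobq_comp // ?dne //; last by rewrite qdet_mul dgp dgai mulr1.
  rewrite -qmapM -I4 qmapM -mobq_comp //; last by rewrite qmapM qdet_mul mulf_neq0 // dne.
  rewrite qmapM -mobq_comp // ?dne // -/gq -/tau -Hxy.
  by rewrite /Tn mobq_transl // !natintR.
have -> : mobq (qmap R U) (x', y') = (((g0 * d)%:~R * x' + (v2 * dl * d)%:~R) / ((n1 * m)%:~R) + k%:~R / m%:R,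
     d%:R ^+ 2 * y' / om%:R).
  have n1R : (n1%:~R : R) != 0 by rewrite intr_eq0.
  have dR : (d%:R : R) != 0 by rewrite pnatr_eq0 -lt0n.
  have mR : (m%:R : R) != 0 by rewrite pnatr_eq0 -lt0n.
  have Eg : (g0%:~R : R) = d%:R * m%:R / n1%:~R.
    apply: (mulIf n1R); rewrite mulrVK ?unitfE // -!natintR -!rmorphM /=.
    by rewrite -HdmZ HN mulrC.
  rewrite Hom /mobq /qmap /qdet /U /= !rmorphM !rmorphD !rmorphM /= Eg !natintR.
  rewrite !(mul0r, add0r, mulr0, subr0, expr0n, addr0) /=.
  congr pair; field; by rewrite ?n1R ?dR ?mR.
apply: (proj2 (equiv1P _ _)); exists (qmul gp gai); split => //.
by rewrite qdet_mul dgp dgai mulr1.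
Qed.
Lemma inGammaE (n : nat) (g : 'M[int]_2) : inGamma n g ->
  exists c0 r, ea g * ed g - eb g * ec g = 1 /\ ec g = (n:int) ^+ 2 * c0 /\ ed g = ea g + (n:int) * r.
Proof.
case=> Hd [/dvdzP [c0 Hc] Hm].
have Hr : ((n:int) %| ed g - ea g)%Z.
  by rewrite -eqz_mod_dvd; apply/eqP; case: Hm => [[H1 H2]|[H1 H2]]; rewrite (eqP H2) (eqP H1).
case/dvdzP: Hr => r Hr.
exists c0, r; split; first by rewrite -det2E.
have E2 : ((n ^ 2)%N : int) = (n:int) ^+ 2 by rewrite expr2 -PoszM expnS expn1.
split; first by rewrite Hc E2 mulrC.
have -> : ed g = ea g + (ed g - ea g) by ring.
by rewrite Hr mulrC.
Qed.
Lemma gcdn_dvd_bez (n : nat) (D : int) : (gcdn (n ^ 2) `|D| %| n)%N ->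
  exists u v G' : int, u * (n:int) ^+ 2 + v * D = G' /\ (G' %| (n:int))%Z.
Proof.
move=> H; have [u [v Huv]] := Bezoutz ((n:int) ^+ 2) D.
exists u, v, (gcdz ((n:int) ^+ 2) D); split => //.
Qed.

Lemma simple_bez (n : nat) (tau : 'M[int]_2) : inSL2 tau -> simple_type n tau ->
  exists u v G' : int, u * (n:int) ^+ 2 + v * ec tau = G' /\ (G' %| (n:int))%Z.
Proof.
rewrite /inSL2 det2E => Ht [g [Hg Hm]].
have [c0 [r [Hdg [Hcg Hdg']]]] := inGammaE Hg.
have n2n : (n ^ 2 %| n)%N -> exists u v G' : int, u * (n:int) ^+ 2 + v * ec tau = G' /\ (G' %| (n:int))%Z.
  move=> H; exists 1, 0, ((n:int) ^+ 2); split; first by rewrite mul1r mul0r addr0.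
  rewrite dvdzE abszX. exact: H.
move: Hm; rewrite /act_cusp /=.
case: ifP => Hc.
  case: ifP => Hcg0; first by rewrite gcdn0; exact: n2n.
  rewrite coprimeq_den; last first.
    rewrite -coprimezE; apply/coprimezP; exists (ed g, - eb g) => /=.
    by rewrite -Hdg; ring.
  rewrite -(intr_eq0 rat) Hcg0 /= => /gcdn_dvd_bez [u [v [G' [H1 H2]]]].
  exists (u + v * c0), 0, G'; split => //.
  by rewrite -H1 Hcg; ring.
case: ifP => Hcg0; first by rewrite gcdn0; exact: n2n.
set a := ea tau; set b := eb tau; set c := ec tau; set dl := ed tau.
set ag := ea g; set bg := eb g; set cg := ec g; set dg := ed g.
have cR : (c%:~R : rat) != 0 by rewrite Hc.
have DR : ((cg * a + dg * c)%:~R : rat) != 0.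
  rewrite rmorphD !rmorphM /=.
  have -> : (cg%:~R * a%:~R + dg%:~R * c%:~R : rat) = c%:~R * (cg%:~R * (a%:~R / c%:~R) + dg%:~R).
    by field.
  by rewrite mulf_neq0 // Hcg0.
have D0 : cg * a + dg * c != 0 by move: DR; rewrite intr_eq0.
have -> : ((ag%:~R * (a%:~R / c%:~R) + bg%:~R) / (cg%:~R * (a%:~R / c%:~R) + dg%:~R) : rat)
    = (ag * a + bg * c)%:~R / (cg * a + dg * c)%:~R.
  move: DR; rewrite !rmorphD !rmorphM /= => DR.
  by field; rewrite cR DR.
rewrite coprimeq_den; last first.
  rewrite -coprimezE; apply/coprimezP; exists (cg * b + dg * dl, - (ag * b + bg * dl)) => /=.
  transitivity ((ag * dg - bg * cg) * (a * dl - b * c)); first by ring.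
  by rewrite Hdg Ht mulr1.
rewrite (negPf D0) => /gcdn_dvd_bez [u [v [G' [H1 H2]]]].
rewrite normrEsg in H1.
exists (u + v * Num.sg (cg * a + dg * c) * c0 * a), (v * Num.sg (cg * a + dg * c) * dg), G'; split => //.
rewrite -H1 /cg Hcg; ring.
Qed.
Lemma decomp (n : nat) (c : int) : (0 < n)%N ->
  (exists u v G' : int, u * (n:int) ^+ 2 + v * c = G' /\ (G' %| (n:int))%Z) ->
  exists g0 n1 c1 u0 v0 : int, 0 < g0 /\ 0 < n1 /\ (n:int) = g0 * n1 /\ c = g0 * c1 /\ u0 * n + v0 * c1 = 1.
Proof.
move=> n0 [U [V [G' [HG' HGn]]]].
pose G := gcdz ((n:int) ^+ 2) c.
have GG' : (G %| G')%Z by rewrite -HG' rpredD // dvdz_mull // ?dvdz_gcdl ?dvdz_gcdr.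
have /dvdzP [n1 Hn1] := dvdz_trans GG' HGn.
have /dvdzP [c1 Hc1'] := dvdz_gcdr ((n:int) ^+ 2) c.
have Hc1 : c = c1 * G by exact: Hc1'.
have [u [v Huv]] := Bezoutz ((n:int) ^+ 2) c.
have G0 : G != 0.
  rewrite /G gcdz_eq0 negb_and; apply/orP; left; rewrite expf_neq0 //; lia.
have Gge0 : 0 <= G by [].
have nG : (n:int) = G * n1 by rewrite mulrC.
have npos : (0 < (n:int)) by lia.
exists G, n1, c1, (u * n1), v; split; first by rewrite lt_def G0 Gge0.
split; first by move: npos; rewrite nG; rewrite pmulr_rgt0 // lt_def G0 Gge0.
split; first by rewrite mulrC.
split; first by rewrite -/G Hc1 mulrC.
apply: (mulIf G0); rewrite mul1r [in RHS]/G -Huv -/G.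
rewrite Hc1.
have -> : (n:int) ^+ 2 = (n:int) * (n1 * G) by rewrite -Hn1 expr2.
ring.
Qed.
Lemma toq_mul (A B : 'M[int]_2) : toq (A *m B) = qmul (toq A) (toq B).
Proof.
rewrite /toq /qmul /ea /eb /ec /ed /= !mxE !big_ord_recl !big_ord0 /=.
have -> : lift ord0 (0 : 'I_1) = 1 :> 'I_2 by apply: val_inj.
by rewrite !addr0.
Qed.

Lemma toq_inj (A B : 'M[int]_2) : toq A = toq B -> A = B.
Proof.
rewrite /toq /ea /eb /ec /ed => [[H1 H2 H3 H4]]; apply/matrixP => i j.
have Hi : forall i : 'I_2, i = ord0 \/ i = 1.
  by move=> [[|[|//]] Hk]; [left|right]; apply: val_inj.
by case: (Hi i) => ->; case: (Hi j) => ->.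
Qed.

Lemma toq_transl k : toq (transl k) = mk2 1 k 0 1.
Proof. by rewrite /toq /transl /ea /eb /ec /ed !mxE. Qed.

Lemma toq_mkM a b c d : toq (mkM a b c d) = mk2 a b c d.
Proof. by have [? ? ? ?] := mkM_E a b c d; rewrite /toq; congr mk2. Qed.

Lemma toq_one : toq 1%:M = q1 int.
Proof. by rewrite /toq /ea /eb /ec /ed !mxE. Qed.

Lemma invmx_tau (tau : 'M[int]_2) : inSL2 tau ->
  invmx tau = mkM (ed tau) (- eb tau) (- ec tau) (ea tau).
Proof.
rewrite /inSL2 => Hd.
have Hu : tau \in unitmx by rewrite unitmxE Hd unitr1.
have H : tau *m mkM (ed tau) (- eb tau) (- ec tau) (ea tau) = 1%:M.
  apply: toq_inj; rewrite toq_mul toq_mkM toq_one /toq /qmul /q1 /=.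
  move: Hd; rewrite det2E => Hd; congr mk2; rewrite -?Hd; ring.
by rewrite -[invmx tau]mulmx1 -H mulmxA mulVmx // mul1mx.
Qed.
Lemma width_val (n : nat) (tau : 'M[int]_2) (om : nat) (g0 n1 c1 u0 v0 : int) :
  (0 < n)%N -> inSL2 tau -> 0 < g0 -> 0 < n1 -> (n:int) = g0 * n1 -> ec tau = g0 * c1 ->
  u0 * n + v0 * c1 = 1 -> is_width n tau om -> (om:int) = n1 ^+ 2.
Proof.
move=> n0 Ht g00 n10 HN Hc Hu [om0 Hw].
have Hd : ea tau * ed tau - eb tau * ec tau = 1 by rewrite -det2E.
have hd : ea tau * ed tau - eb tau * ec tau - 1 = 0 by rewrite Hd subrr.
set a := ea tau in Hd hd *; set b := eb tau in Hd hd *; set c := ec tau in Hd hd Hc *;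
  set dl := ed tau in Hd hd *.
have EM k : toq (tau *m transl k *m invmx tau) = mk2 (1 - a * c * k) (a ^+ 2 * k) (- (c ^+ 2 * k)) (1 + a * c * k).
  rewrite !toq_mul invmx_tau // toq_transl toq_mkM /toq /qmul /= -/a -/b -/c -/dl; congr mk2.
  - apply/eqP; rewrite -subr_eq0; apply/eqP; lin (a * dl - b * c - 1); by rewrite hd.
  - ring.
  - ring.
  - apply/eqP; rewrite -subr_eq0; apply/eqP; lin (a * dl - b * c - 1); by rewrite hd.
have entries k : let M := tau *m transl k *m invmx tau in
   [/\ ea M = 1 - a * c * k, eb M = a ^+ 2 * k, ec M = - (c ^+ 2 * k) & ed M = 1 + a * c * k].
  by move=> M; have := EM k; rewrite /toq => -[-> -> -> ->].
have E2 : ((n ^ 2)%N : int) = (n:int) ^+ 2 by rewrite expr2 -PoszM expnS expn1.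
have g0ne : g0 != 0 by rewrite gt_eqF.
have D1 : (n1 ^+ 2 %| (om:int))%Z.
  have [_ [Hc2 _]] := (proj2 (Hw om)) (dvdzz _).
  have [_ _ Ec _] := entries (om:int).
  move: Hc2; rewrite Ec E2 => /dvdzP [q Hq].
  have Hq' : c1 ^+ 2 * om = (- q) * n1 ^+ 2.
    apply: (mulfI (expf_neq0 2 g0ne)).
    have -> : g0 ^+ 2 * (c1 ^+ 2 * om) = - (- (c ^+ 2 * om)) by rewrite Hc; ring.
    by rewrite Hq HN; ring.
  have cop : coprimez (n1 ^+ 2) (c1 ^+ 2).
    rewrite coprimez_pexpl // coprimez_pexpr //; apply/coprimezP; exists (u0 * g0, v0) => /=.
    by rewrite -Hu HN; ring.
  by rewrite -(Gauss_dvdzr _ cop) Hq' dvdz_mull.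
have D2 : ((om:int) %| n1 ^+ 2)%Z.
  apply/(Hw (n1 ^+ 2)); have [Ea Eb Ec Ed] := entries (n1 ^+ 2).
  split; first by rewrite /inSL2 det2E Ea Eb Ec Ed; ring.
  split.
    rewrite Ec E2; apply/dvdzP; exists (- c1 ^+ 2); rewrite Hc HN; ring.
  left; split; rewrite eqz_mod_dvd; apply/dvdzP.
  - exists (- (a * c1 * n1)); rewrite Ea Hc HN; ring.
  - exists (a * c1 * n1); rewrite Ed Hc HN; ring.
move: D1 D2; rewrite !dvdzE => D1 D2.
have : (`|n1 ^+ 2|%N == om) by rewrite eqn_dvd D1 D2.
move/eqP => <-; rewrite gez0_abs // exprn_ge0 // ltW //.
Qed.
Unset Implicit Arguments.
Theorem proposition7p7 (R : realType) (n : nat) (tau : 'M[int]_2) (omega : nat) :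
  (0 < n)%N -> inSL2 tau -> simple_type n tau -> is_width n tau omega ->
  exists xc : R -> nat -> R,
    forall x y x' y' : R, 0 < y -> 0 < y' ->
      (exists g : 'M[int]_2, inGamma n g /\ (x, y) = mob g (mob tau (x', y'))) ->
      forall w : R * R, inH w ->
        (inRn n x y w <->
         exists d : nat, (d %| n)%N /\
           inRpr (n %/ d) (xc x' d) (d%:R ^+ 2 * y' / omega%:R) w).
Proof.
move=> n0 Ht Hs Hw.
have [g0 [n1 [c1 [u0 [v0 [g00 [n10 [HN [Hc Hu0]]]]]]]]] := decomp n0 (simple_bez Ht Hs).
have Hom := width_val n0 Ht g00 n10 HN Hc Hu0 Hw.
have HomR : (omega%:R : R) = n1%:~R ^+ 2 by rewrite -natintR Hom rmorphXn.
have Hdet : ea tau * ed tau - eb tau * ec tau = 1 by rewrite -det2E.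
set a := ea tau in Hdet *; set b := eb tau in Hdet *; set c := ec tau in Hdet Hc *;
  set dl := ed tau in Hdet *.
pose u2 := u0 ^+ 2; pose v2 := 2 * u0 * v0 * n + v0 ^+ 2 * c1.
have Hu2 : u2 * (n:int) ^+ 2 + v2 * c1 = 1.
  have h : u0 * n + v0 * c1 - 1 = 0 by rewrite Hu0 subrr.
  apply/eqP; rewrite -subr_eq0; apply/eqP.
  linu ((u0 * n + v0 * c1 - 1) * (u0 * n + v0 * c1 - 1) + 2 * (u0 * n + v0 * c1 - 1)).
  by rewrite h; ring.
exists (fun (x' : R) (d : nat) => ((g0 * (d:int))%:~R * x' + (v2 * dl * (d:int))%:~R) / ((n1 * ((n %/ d)%N : int))%:~R)).
move=> x y x' y' y0 y'0 [g [Hg Hxy]] w Hw'.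
have [c0 [r [Hgd [Hcg Hdg]]]] := inGammaE Hg.
have Hxy' : (x, y) = mobq (qmap R (mk2 (ea g) (eb g) (ec g) (ed g)))
                         (mobq (qmap R (mk2 a b c dl)) (x', y')).
  rewrite Hxy !mob_mobq //; rewrite /toq /qdet //=.
have Fw := @forward R n a b c dl g0 n1 c1 u0 v0 u2 v2 (ea g) (eb g) (ec g) (ed g) c0 r x y x' y'.
have Fw' := fun j d m f s1 t1 k t => Fw j d m f s1 t1 k t omega n0 HN Hc Hdet Hu0 Hu2 Hgd Hcg Hdg y'0 y0 Hxy'.
clear Fw.
have Nne0 : (n:int) != 0 by lia.
have Ppos (d : nat) (X : R) : (0 < d)%N -> 0 < (X, d%:R ^+ 2 * y' / omega%:R).2.
  move=> d0 /=; rewrite HomR; apply: divr_gt0; last by apply: exprn_gt0; rewrite ltr0z.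
  by apply: mulr_gt0 => //; apply: exprn_gt0; rewrite ltr0n.
split.
- case=> j [jn Hwj].
  pose e := n1 * a + (j:int) * c1.
  pose d := gcdn `|e| n.
  have d0 : (0 < d)%N by rewrite gcdn_gt0 n0 orbT.
  have dn : (d %| n)%N by apply: dvdn_gcdr.
  pose m := (n %/ d)%N.
  have Hdm : n = (d * m)%N by rewrite /m mulnC divnK.
  have m0 : (0 < m)%N by move: n0; rewrite Hdm muln_gt0 => /andP [].
  have /dvdzP [f Hf] : ((d:int) %| e)%Z by rewrite dvdzE /= dvdn_gcdl.
  have He : n1 * a + (j:int) * c1 = (d:int) * f by rewrite -/e Hf mulrC.
  have [u [v Huv]] := Bezoutz e n.
  have Hfm : u * f + v * m = 1.
    have dz : (d:int) != 0 by lia.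
    apply: (mulIf dz); rewrite mul1r.
    transitivity (gcdz e n); last by [].
    by rewrite -Huv Hf {1}Hdm PoszM; ring.
  pose beta := u0 * d * (u * f + v * m) + v0 * c1 * v.
  have Hinv : (v0 * u) * (c1 * f) + beta * m = 1.
    transitivity ((u0 * n + v0 * c1) * (u * f + v * m)); last by rewrite Hu0 Hfm mulr1.
    by rewrite /beta Hdm PoszM; ring.
  pose k0 := - (v0 * u).
  pose k := (k0 %% m)%Z.
  have mz : (m:int) != 0 by lia.
  have k_ge0 : 0 <= k by apply: modz_ge0.
  have k_lt : k < m by apply: ltz_pmod; lia.
  pose t := beta - c1 * (k0 %/ m)%Z * f.
  have Hk : c1 * k * f + 1 = t * m.
    have Ek : k = k0 - (k0 %/ m)%Z * m by rewrite /k {2}(divz_eq k0 m); ring.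
    rewrite Ek /t -Hinv /k0; ring.
  have Ekn : k = Posz `|k|%N by rewrite gez0_abs.
  have F := Fw' j d m f u v k t Hdm He Hfm Hk HomR.
  exists d; split => //; exists `|k|%N; split.
  + by move: k_lt; rewrite {1}Ekn; lia.
  + change (coprime `|k| `|(m:int)|); rewrite -coprimezE; apply/coprimezP; exists (- (c1 * f), t) => /=.
    by rewrite -Hk; ring.
  + rewrite {}Ekn natintR in F.
    apply: (equiv1_trans _ _ Hwj F) => //.
    exact: Ppos.
- case=> d [dn [k' [k'm Hcop Hwk]]].
  have d0 : (0 < d)%N by move: n0; apply: contraTT; rewrite -eqn0Ngt => /eqP d0; move: dn; rewrite d0 dvd0n -eqn0Ngt.
  pose m := (n %/ d)%N.
  have Hdm : n = (d * m)%N by rewrite /m mulnC divnK.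
  have m0 : (0 < m)%N by move: n0; rewrite Hdm muln_gt0 => /andP [].
  have mz : (m:int) != 0 by lia.
  have /coprimezP [[al1 be1] /= Hab] : coprimez (k':int) m by rewrite coprimezE.
  pose f0 := - (al1 * v0).
  pose t0 := al1 * k' * u0 * (d:int) + be1 * (u0 * (d:int) * (m:int) + v0 * c1).
  have Hf0 : c1 * k' * f0 + 1 = t0 * m.
    transitivity (c1 * k' * f0 + (al1 * k' + be1 * m) * (u0 * n + v0 * c1)); first by rewrite Hab Hu0 mulr1.
    by rewrite /f0 /t0 Hdm PoszM; ring.
  pose j0 := v0 * ((d:int) * f0 - n1 * a).
  pose jz := (j0 %% n)%Z.
  have j_ge0 : 0 <= jz by apply: modz_ge0.
  have j_lt : jz < n by apply: ltz_pmod; lia.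
  pose qj := (j0 %/ n)%Z.
  have Ej : jz = j0 - qj * n by rewrite /jz /qj {2}(divz_eq j0 n); ring.
  pose f := f0 - (m:int) * (u0 * ((d:int) * f0 - n1 * a) + qj * c1).
  have He : n1 * a + jz * c1 = (d:int) * f.
    have hv : v0 * c1 = 1 - u0 * n by rewrite -Hu0; ring.
    transitivity (n1 * a + v0 * c1 * ((d:int) * f0 - n1 * a) - qj * n * c1); first by rewrite Ej /j0; ring.
    by rewrite hv /f {1 2}Hdm PoszM; ring.
  pose t := t0 - c1 * k' * (u0 * ((d:int) * f0 - n1 * a) + qj * c1).
  have Hk : c1 * k' * f + 1 = t * m.
    transitivity (c1 * k' * f0 + 1 - c1 * k' * (m:int) * (u0 * ((d:int) * f0 - n1 * a) + qj * c1)); first by rewrite /f; ring.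
    by rewrite Hf0 /t; ring.
  have Hfm : (- (c1 * k')) * f + t * m = 1 by rewrite -Hk; ring.
  have Ejn : jz = Posz `|jz|%N by rewrite gez0_abs.
  rewrite {}Ejn in He j_lt.
  have F := Fw' `|jz|%N d m f (- (c1 * k')) t k' t Hdm He Hfm Hk HomR.
  exists `|jz|%N; split; first by lia.
  rewrite natintR in F.
  apply: (equiv1_trans _ _ Hwk) => //; first exact: Ppos.
  by apply: equiv1_sym; [exact: Ppos | exact: F].
Qed.
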